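(* Let $A\in\mathbb{R}^{n\times n}$ be symmetric, let $W_k\in\mathbb{R}^{n\times m}$ satisfy $W_k^TW_k=I_m$, and let $v_{k-1},v_k\in\mathbb{R}^{n\times p}$ and $\alpha_k,\beta_k\in\mathbb{R}^{p\times p}$ be given. Define block vectors $q_{k+j}$, $j\ge1$, by the continuation process \[ \begin{aligned} \tilde q_{k+1}&=Av_k-v_k\alpha_k-v_{k-1}\beta_k^T, & q_{k+1}\beta_{k+1}&=(I_n-P_1)\tilde q_{k+1},\\ \tilde q_{k+2}&=Aq_{k+1}-v_k\beta_{k+1}^T, & q_{k+2}\beta_{k+2}&=(I_n-P_2)\tilde q_{k+2},\\ \tilde q_{k+j}&=Aq_{k+j-1}-q_{k+j-2}\beta_{k+j-1}^T, & q_{k+j}\beta_{k+j}&=(I_n-P_j)\tilde q_{k+j},\quad j\ge3, \end{aligned} \] where $P_1=W_kW_k^T$, $P_2=P_1+q_{k+1}q_{k+1}^T$, $P_j=P_2+q_{k+j-1}q_{k+j-1}^T$ for $j\ge3$, and where, for each $j$, the columns of $q_{k+j}$ form an orthonormal basis of the column space of $(I_n-P_j)\tilde q_{k+j}$ and $\beta_{k+j}$ is the (possibly rectangular) matrix of full row rank with $q_{k+j}\beta_{k+j}=(I_n-P_j)\tilde q_{k+j}$. Then for every $j\ge1$ the set of columns of $W_k,q_{k+1},\ldots,q_{k+j}$ is orthonormal. Moreover, for $j\ge3$, \[ \beta_{k+j}=q_{k+j}^TAq_{k+j-1}. \]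
   Context: In cases of rank deficiency the number of columns of $q_{k+j}$ is reduced accordingly (it equals the rank of $(I_n-P_j)\tilde q_{k+j}$). *)

(* Defs.v *)
From mathcomp Require Import all_boot all_algebra.
Set Implicit Arguments. Unset Strict Implicit. Unset Printing Implicit Defensive.
Import GRing.Theory.
Local Open Scope ring_scope.

(* Indexing convention: the block vector q_{k+j} is [q j] (j >= 1), with
   [r j] columns; [r 0] = p is the number of columns of v_{k-1}, v_k.
   [beta j] is beta_{k+j}, of size r j x r (j-1).  [q 0] and [beta 0]
   are unused. *)

Definition projP (R : fieldType) (n m : nat) (r : nat -> nat)
  (W : 'M[R]_(n, m)) (q : forall j, 'M[R]_(n, r j)) (j : nat) : 'M[R]_n :=
  let P1 := W *m W^T in
  let P2 := P1 + q 1%N *m (q 1%N)^T in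
  if (j <= 1)%N then P1 else if j == 2%N then P2
  else P2 + q j.-1 *m (q j.-1)^T.

Definition qtilde (R : fieldType) (n : nat) (r : nat -> nat)
  (A : 'M[R]_n) (vkm1 vk : 'M[R]_(n, r 0%N)) (alpha betak : 'M[R]_(r 0%N))
  (q : forall j, 'M[R]_(n, r j)) (beta : forall j, 'M[R]_(r j, r j.-1))
  (j : nat) : 'M[R]_(n, r j.-1) :=
  match j return 'M[R]_(n, r j.-1) with
  | 0 => 0
  | 1 => A *m vk - vk *m alpha - vkm1 *m betak^T
  | 2 => A *m q 1%N - vk *m (beta 1%N)^T
  | j'.+1 => A *m q j' - q j'.-1 *m (beta j')^T
  end.

(* The columns of W, q_{k+1}, ..., q_{k+j} form an orthonormal set,
   i.e. the Gram matrix of the concatenation [W, q 1, ..., q j] is the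
   identity, written blockwise. *)
Definition cols_orthonormal (R : fieldType) (n m : nat) (r : nat -> nat)
  (W : 'M[R]_(n, m)) (q : forall j, 'M[R]_(n, r j)) (j : nat) : Prop :=
  W^T *m W = 1%:M /\
  (forall i, (1 <= i <= j)%N -> (q i)^T *m q i = 1%:M /\ W^T *m q i = 0) /\
  (forall i l, (1 <= i <= j)%N -> (1 <= l <= j)%N -> i != l ->
     (q i)^T *m q l = 0).

(* Main.v *)
Require Import Defs.
From mathcomp Require Import all_boot all_algebra zify.
Import GRing.Theory.
Local Open Scope ring_scope.

Theorem theorem3 (R : realFieldType) (n m : nat) (r : nat -> nat)
  (A : 'M[R]_n) (W : 'M[R]_(n, m))
  (vkm1 vk : 'M[R]_(n, r 0%N)) (alpha betak : 'M[R]_(r 0%N))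
  (q : forall j, 'M[R]_(n, r j)) (beta : forall j, 'M[R]_(r j, r j.-1)) :
  A^T = A ->
  W^T *m W = 1%:M ->
  (forall j, (1 <= j)%N ->
     let X := (1%:M - projP W q j) *m qtilde A vkm1 vk alpha betak q beta j in
     [/\ (q j)^T *m q j = 1%:M,
         ((q j)^T == X^T)%MS,
         q j *m beta j = X
       & row_free (beta j)]) ->
  (forall j, (1 <= j)%N -> cols_orthonormal W q j) /\
  (forall j, (3 <= j)%N -> beta j = (q j)^T *m A *m q j.-1).
Proof.
move=> HA HW H.
set qt := qtilde A vkm1 vk alpha betak q beta.
have kill : forall j, (1 <= j)%N -> forall s (B : 'M[R]_(s, n)),
   B *m ((1%:M - projP W q j) *m qt j) = 0 -> B *m q j = 0.
  move=> j j1 s B HB; have [_ /andP[/submxP [D HD] _] _ _] := H j j1.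
  by rewrite -[q j]trmxK HD trmx_mul trmxK mulmxA HB mul0mx.
have tr0 : forall a b (M : 'M[R]_(a, b)), M^T = 0 -> M = 0.
  by move=> a b M HM; apply: trmx_inj; rewrite HM trmx0.
have trq : forall a b c (M : 'M[R]_(a, b)) (N : 'M[R]_(a, c)), M^T *m N = 0 -> N^T *m M = 0.
  by move=> a b c M N HM; apply: tr0; rewrite trmx_mul trmxK HM.
have projL : forall s a b (B : 'M[R]_(s, n)),
  B *m (1%:M - (W *m W^T + q a *m (q a)^T + q b *m (q b)^T)) =
  B - (B *m W) *m W^T - (B *m q a) *m (q a)^T - (B *m q b) *m (q b)^T.
  by move=> s a b B; rewrite mulmxBr mulmx1 !mulmxDr !mulmxA !opprD !addrA.
have projL2 : forall s (B : 'M[R]_(s, n)),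
  B *m (1%:M - (W *m W^T + q 1%N *m (q 1%N)^T)) =
  B - (B *m W) *m W^T - (B *m q 1%N) *m (q 1%N)^T.
  by move=> s B; rewrite mulmxBr mulmx1 !mulmxDr !mulmxA !opprD !addrA.
have Hqq : forall j, (1 <= j)%N -> (q j)^T *m q j = 1%:M.
  by move=> j j1; have [] := H j j1.
have main : forall j, (forall i, (1 <= i <= j)%N -> W^T *m q i = 0) /\
  (forall i l, (1 <= i <= j)%N -> (1 <= l <= j)%N -> i != l -> (q i)^T *m q l = 0).
  elim=> [|j [IW IO]].
    by split=> [i|i l] /andP[h1 h2]; exfalso; lia.
  have [newW newO] : W^T *m q j.+1 = 0 /\
      (forall i, (1 <= i <= j)%N -> (q i)^T *m q j.+1 = 0).
    case: j IW IO => [|[|j]] IW IO.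
    - split; last by move=> i /andP[h1 h2]; exfalso; lia.
      apply: kill => //.
      by rewrite /projP /= mulmxA (mulmxBr W^T) mulmx1 mulmxA HW mul1mx subrr mul0mx.
    - have W1 : W^T *m q 1%N = 0 by apply: IW.
      have W1' := trq _ _ _ _ _ W1.
      split.
        apply: kill => //.
        by rewrite /projP /= mulmxA projL2 HW W1 mul1mx mul0mx !subr0 subrr mul0mx.
      move=> i /andP[h1 h2]; have -> : i = 1%N by lia.
      apply: kill => //.
      by rewrite /projP /= mulmxA projL2 W1' (Hqq 1%N) // mul1mx mul0mx subr0 subrr mul0mx.
    - have W1 : W^T *m q 1%N = 0 by apply: IW.
      have W1' := trq _ _ _ _ _ W1.
      have Wj : W^T *m q j.+2 = 0 by apply: IW; lia.
      have Wj' := trq _ _ _ _ _ Wj.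
      have O1j : (q 1%N)^T *m q j.+2 = 0 by apply: IO; lia.
      have Oj1 := trq _ _ _ _ _ O1j.
      split.
        apply: kill => //.
        by rewrite /projP /= mulmxA projL HW W1 Wj mul1mx !mul0mx !subr0 subrr mul0mx.
      move=> i /andP[h1 h2].
      apply: kill => //.
      case: (i =P 1%N) => [->|ne1].
        by rewrite /projP /= mulmxA projL W1' (Hqq 1%N) // O1j mul1mx !mul0mx !subr0 subrr mul0mx.
      case: (i =P j.+2) => [->|ne2].
        by rewrite /projP /= mulmxA projL Wj' (Hqq j.+2) // Oj1 mul1mx !mul0mx !subr0 subrr mul0mx.
      have Wi : W^T *m q i = 0 by apply: IW; lia.
      have Wi' := trq _ _ _ _ _ Wi.
      have Oi1 : (q i)^T *m q 1%N = 0 by apply: IO; lia.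
      have Oij : (q i)^T *m q j.+2 = 0 by apply: IO; lia.
      rewrite /projP /= mulmxA projL Wi' Oi1 Oij !mul0mx !subr0.
      rewrite /qt /= mulmxBr mulmxA.
      case: i h1 h2 ne1 ne2 Wi Wi' Oi1 Oij => [|[|i]] h1 h2 ne1 ne2 Wi Wi' Oi1 Oij; try lia.
      have KA : (q j.+2)^T *m A *m q i.+2 = (q j.+2)^T *m q i.+3 *m beta i.+3.
        have [_ _ Hx _] := H i.+3 isT.
        move: Hx; rewrite /projP /qt /= => Hx.
        have Cw : (q j.+2)^T *m W = 0 by apply: trq; apply: IW; lia.
        have C1 : (q j.+2)^T *m q 1%N = 0 by apply: IO; lia.
        have Ci : (q j.+2)^T *m q i.+2 = 0 by apply: IO; lia.
        have Ci1 : (q j.+2)^T *m q i.+1 = 0 by apply: IO; lia.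
        rewrite -[RHS]mulmxA Hx mulmxBl mul1mx mulmxBr.
        rewrite [X in _ - X]mulmxA !mulmxDr !mulmxA Cw C1 Ci !mul0mx !addr0. 
        by rewrite !mul0mx !addr0 subr0 mulmxN mulmxA Ci1 mul0mx oppr0 addr0.
      have -> : (q i.+2)^T *m A *m q j.+2 = ((q j.+2)^T *m A *m q i.+2)^T.
        by rewrite !trmx_mul trmxK HA mulmxA.
      rewrite KA.
      case: (i.+1 =P j) => [Ej|nej].
        subst j.
        by rewrite (Hqq i.+3) // mul1mx mulmxA (Hqq i.+2) // mul1mx subrr.
      have -> : (q j.+2)^T *m q i.+3 = 0 by apply: IO; lia.
      rewrite mulmxA; have -> : (q i.+2)^T *m q j.+1 = 0 by apply: IO; lia.
      by rewrite !mul0mx trmx0 subrr.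
  split.
    move=> i /andP[h1 h2]; rewrite leq_eqVlt in h2; case/orP: h2 => [/eqP->|h2].
      exact: newW.
    by apply: IW; lia.
  move=> i l /andP[h1 h2] /andP[h3 h4] nil.
  case: (i =P j.+1) => [Ei|nei]; case: (l =P j.+1) => [El|nel].
  - by exfalso; move/eqP: nil; apply; rewrite Ei El.
  - by rewrite Ei; apply: trq; apply: newO; lia.
  - by rewrite El; apply: newO; lia.
  - by apply: IO; lia.
split.
  move=> j j1; split => //; split.
    move=> i hi; split; first by apply: Hqq; lia.
    by apply: (proj1 (main j)).
  by move=> i l hi hl; apply: (proj2 (main j)).
move=> [|[|[|j]]] // _.
have [_ _ Hx _] := H j.+3 isT.
have [IW IO] := main j.+3.
have Cw : (q j.+3)^T *m W = 0 by apply: trq; apply: IW; lia.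
have C1 : (q j.+3)^T *m q 1%N = 0 by apply: IO; lia.
have Ci : (q j.+3)^T *m q j.+2 = 0 by apply: IO; lia.
have Ci1 : (q j.+3)^T *m q j.+1 = 0 by apply: IO; lia.
rewrite -[beta _]mul1mx -(Hqq j.+3) // -mulmxA Hx /projP /= mulmxA projL Cw C1 Ci.
rewrite !mul0mx !subr0 /qt /= mulmxBr !mulmxA Ci1 mul0mx subr0.
by [].
Qed.
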